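(* Let $\gamma_*\in(0,1]$ and $\zeta_*\in(0,1]$. Define for $t\in\mathbb{R}$ \[ \tilde f(t)=\frac{1}{\sqrt{2\pi}}\int_{-\infty}^t\Big[(1-\tfrac12\zeta_* )e^{-x^2/2}+\tfrac12\zeta_*e^{-(x-2\gamma_* )^2/2}-(1-\zeta_* )e^{-x^2/2}-\zeta_*e^{-(x-\gamma_* )^2/2}\Big]dx, \] and $f(t)=|\tilde f(t)|$. Let \[ t_+=\tfrac32\gamma_*+\tfrac{1}{\gamma_*}\log\left(1-\sqrt{1-e^{-\gamma_*^2}}\right),\qquad t_-=\tfrac32\gamma_*+\tfrac{1}{\gamma_*}\log\left(1+\sqrt{1-e^{-\gamma_*^2}}\right). \] Then the set of maximizers of $f$ over $\mathbb{R}$ is exactly $\{t_+,t_-\}$, and $\tilde f(t_+)>0$, $\tilde f(t_-)<0$. *)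

(* Defs.v *)
From Stdlib Require Import Reals.
From Coquelicot Require Import Coquelicot.
Open Scope R_scope.

Definition integrand (g z x : R) : R :=
  (1 - z/2) * exp (- x^2 / 2) + z/2 * exp (- (x - 2*g)^2 / 2)
  - (1 - z) * exp (- x^2 / 2) - z * exp (- (x - g)^2 / 2).

Definition ftilde (g z t : R) : R :=
  / sqrt (2 * PI) * RInt_gen (integrand g z) (Rbar_locally m_infty) (at_point t).

Definition fabs (g z t : R) : R := Rabs (ftilde g z t).

Definition tplus (g : R) : R := 3/2 * g + / g * ln (1 - sqrt (1 - exp (- g^2))).
Definition tminus (g : R) : R := 3/2 * g + / g * ln (1 + sqrt (1 - exp (- g^2))).

(* Main.v *)
Require Import Defs.
From Stdlib Require Import Reals Lra.
From Coquelicot Require Import Coquelicot.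
Open Scope R_scope.

Definition phi (x : R) : R := exp (- x^2 / 2).

Lemma phi_cont (x : R) : continuous (T:=R_UniformSpace) (U:=R_UniformSpace) phi x.
Proof. apply (ex_derive_continuous (V:=R_NormedModule)). unfold phi. auto_derive. auto. Qed.

Lemma phi_exRInt a b : ex_RInt phi a b.
Proof. apply (ex_RInt_continuous (V:=R_CompleteNormedModule)). intros; apply phi_cont. Qed.

Lemma phi_pos x : 0 < phi x.
Proof. apply exp_pos. Qed.

Lemma phi_bound x : phi x <= exp (x + /2).
Proof.
  unfold phi. assert (h: - x^2/2 <= x + /2) by (pose proof (pow2_ge_0 (x+1)); nra).
  destruct (Rle_lt_or_eq_dec _ _ h) as [l|e].
  left; apply exp_increasing; auto. rewrite e; lra.
Qed.

Lemma RInt_expb a b : RInt (fun x => exp (x + /2)) a b = exp (b + /2) - exp (a + /2).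
Proof.
  apply is_RInt_unique.
  apply (is_RInt_derive (fun x => exp (x + /2))).
  intros; auto_derive; auto; ring.
  intros; apply (ex_derive_continuous (V:=R_NormedModule)); auto_derive; auto.
Qed.

Lemma phi_int_bound a b : a <= b -> 0 <= RInt phi a b <= exp (b + /2).
Proof.
  intros hab. split.
  apply RInt_ge_0; auto. apply phi_exRInt. intros; left; apply phi_pos.
  apply Rle_trans with (RInt (fun x => exp (x + /2)) a b).
  apply RInt_le; auto. apply phi_exRInt.
  apply (ex_RInt_continuous (V:=R_CompleteNormedModule)); intros; apply (ex_derive_continuous (V:=R_NormedModule)); auto_derive; auto.
  intros; apply phi_bound.
  rewrite RInt_expb. pose proof (exp_pos (a + /2)). lra.
Qed.

Lemma phi_limit : exists L : R, filterlim (fun a => RInt phi a 0) (Rbar_locally m_infty) (locally L).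
Proof.
  apply (proj1 (@filterlim_locally_cauchy R R_CompleteSpace _ (Rbar_locally_filter m_infty) _)).
  intros eps.
  exists (fun a => a < ln eps - 1).
  split.
  exists (ln eps - 1); auto.
  intros u v hu hv.
  change (Rabs (RInt phi v 0 - RInt phi u 0) < eps).
  assert (key: forall a b, a <= b -> b < ln eps - 1 -> Rabs (RInt phi b 0 - RInt phi a 0) < eps).
  { intros a b hab hb.
    rewrite <- (RInt_Chasles phi a b 0) by apply phi_exRInt.
    change (plus ?x ?y) with (x + y).
    pose proof (phi_int_bound a b hab).
    assert (exp (b + /2) < eps).
    { rewrite <- (exp_ln eps) by apply cond_pos. apply exp_increasing. lra. }
    rewrite Rabs_left1; lra. }
  destruct (Rle_dec u v).
  apply key; auto.
  rewrite Rabs_minus_sym. apply key; auto; lra.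
Qed.

Definition E (L t : R) : R := RInt phi 0 t + L.

Lemma E_deriv L t : is_derive (E L) t (phi t).
Proof.
  unfold E. replace (phi t) with (phi t + 0) by ring.
  apply (is_derive_plus (fun t => RInt phi 0 t) (fun _ => L)).
  apply (is_derive_RInt phi (fun t => RInt phi 0 t) 0 t).
  apply filter_forall; intros; apply (RInt_correct (V:=R_CompleteNormedModule)), phi_exRInt.
  apply phi_cont.
  apply (is_derive_const (K:=R_AbsRing) (V:=R_NormedModule)).
Qed.

Lemma E_lim L : filterlim (fun a => RInt phi a 0) (Rbar_locally m_infty) (locally L) ->
  is_lim (E L) m_infty 0.
Proof.
  intros HL.
  apply is_lim_ext with (fun t => L - RInt phi t 0).
  intros; unfold E. rewrite <- (opp_RInt_swap phi) by apply phi_exRInt.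
  change (opp ?x) with (- x). ring.
  replace (Finite 0) with (Finite (L - L)) by (f_equal; ring).
  apply is_lim_minus'. apply is_lim_const. exact HL.
Qed.

Lemma E_sym L t : E L t + E L (- t) = 2 * E L 0.
Proof.
  set (F := fun t => E L t + E L (- t)).
  assert (D : forall t, is_derive F t 0).
  { intros s. unfold F. replace 0 with (phi s + (-1) * phi (- s)).
    apply (is_derive_plus (E L) (fun t => E L (- t))). apply E_deriv.
    apply (is_derive_comp (E L) (fun t => - t)). apply E_deriv.
    auto_derive; auto; ring.
    unfold phi. replace ((- s)^2) with (s^2) by ring. ring. }
  change (F t = 2 * E L 0).
  replace (2 * E L 0) with (F 0) by (unfold F; rewrite Ropp_0; ring).
  destruct (Rtotal_order t 0) as [h|[h|h]].
  apply (eq_is_derive (V:=R_NormedModule) F); auto.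
  now subst.
  symmetry; apply (eq_is_derive (V:=R_NormedModule) F); auto.
Qed.

Definition Q (g z L t : R) : R := z/2 * (E L t + E L (t - 2*g) - 2 * E L (t - g)).

Lemma E_ex L t : ex_derive (E L) t.
Proof. eexists; apply E_deriv. Qed.

Lemma Q_deriv g z L t : is_derive (Q g z L) t (integrand g z t).
Proof.
  unfold Q. auto_derive.
  repeat split; apply E_ex.
  rewrite !(is_derive_unique _ _ _ (E_deriv L _)).
  unfold integrand, phi. rewrite !Rmult_1_l. replace (t + - (2*g)) with (t - 2*g) by ring. replace (t + - g) with (t - g) by ring. field.
Qed.

Lemma E_refl L a b : a = - b -> E L a = 2 * E L 0 - E L b.
Proof. intros ->. pose proof (E_sym L b). lra. Qed.

Lemma Q_odd g z L t : Q g z L (2*g - t) = - Q g z L t.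
Proof.
  unfold Q.
  rewrite (E_refl L (2*g - t) (t - 2*g)) by ring.
  rewrite (E_refl L (2*g - t - 2*g) t) by ring.
  rewrite (E_refl L (2*g - t - g) (t - g)) by ring.
  ring.
Qed.

Lemma E_shift_lim L c : filterlim (fun a => RInt phi a 0) (Rbar_locally m_infty) (locally L) ->
  is_lim (fun t => E L (t - c)) m_infty 0.
Proof.
  intros HL. apply (is_lim_comp (E L) (fun t => t - c) m_infty 0 m_infty).
  apply E_lim; auto.
  intros P [M HM]. exists (M + c). intros x hx. apply HM. simpl; lra.
  exists 0. intros; discriminate.
Qed.

Lemma lim_scal0 (f : R -> R) a : is_lim f m_infty 0 -> is_lim (fun t => a * f t) m_infty 0.
Proof.
  intros H. replace (Finite 0) with (Rbar_mult a (Finite 0)) by (simpl; f_equal; ring).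
  apply is_lim_scal_l; auto.
Qed.

Lemma Q_lim g z L : filterlim (fun a => RInt phi a 0) (Rbar_locally m_infty) (locally L) ->
  is_lim (Q g z L) m_infty 0.
Proof.
  intros HL. unfold Q.
  apply lim_scal0.
  replace (Finite 0) with (Finite (0 + 0 - 0)) by (f_equal; ring).
  apply is_lim_minus'. apply is_lim_plus'.
  apply (is_lim_ext (fun t => E L (t - 0))). intros; f_equal; ring. apply E_shift_lim; auto.
  apply E_shift_lim; auto.
  apply lim_scal0. apply E_shift_lim; auto.
Qed.

Definition uu (g t : R) := exp (g*t - 3/2*g^2).

Lemma integrand_factor g z t : integrand g z t =
  z/2 * exp (-(t-g)^2/2) / uu g t * ((uu g t)^2 - 2 * uu g t + exp (- g^2)).
Proof.
  unfold uu.
  assert (h1 : exp (- t^2/2) = exp (-(t-g)^2/2) * exp (- g^2) / exp (g*t - 3/2*g^2)).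
  { unfold Rdiv. rewrite <- exp_Ropp, <- !exp_plus. f_equal. field. }
  assert (h2 : exp (- (t - 2*g)^2/2) = exp (-(t-g)^2/2) * exp (g*t - 3/2*g^2)).
  { rewrite <- !exp_plus. f_equal. field. }
  unfold integrand. rewrite h1, h2.
  pose proof (exp_pos (g*t - 3/2*g^2)). field. lra.
Qed.

Definition ss g := sqrt (1 - exp (- g^2)).

Lemma ss_facts g : 0 < g -> 0 < ss g < 1 /\ (ss g)^2 = 1 - exp (- g^2).
Proof.
  intros hg. unfold ss.
  assert (h1 : exp (- g^2) < 1). { rewrite <- exp_0. apply exp_increasing. nra. }
  pose proof (exp_pos (- g^2)).
  assert (h3 : (sqrt (1 - exp (- g^2)))^2 = 1 - exp (- g^2)).
  { rewrite <- Rsqr_pow2. apply Rsqr_sqrt. lra. }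
  assert (h4 : 0 < sqrt (1 - exp (- g^2))) by (apply sqrt_lt_R0; lra).
  split; [split|]; auto. nra.
Qed.

Lemma uu_tplus g : 0 < g -> uu g (tplus g) = 1 - ss g.
Proof.
  intros hg. pose proof (ss_facts g hg).
  unfold uu, tplus. replace (g * (3 / 2 * g + / g * ln (1 - sqrt (1 - exp (- g ^ 2)))) - 3 / 2 * g ^ 2)
   with (ln (1 - sqrt (1 - exp (- g ^ 2)))) by (field; lra).
  rewrite exp_ln. reflexivity. unfold ss in H. lra.
Qed.

Lemma uu_tminus g : 0 < g -> uu g (tminus g) = 1 + ss g.
Proof.
  intros hg. pose proof (ss_facts g hg).
  unfold uu, tminus. replace (g * (3 / 2 * g + / g * ln (1 + sqrt (1 - exp (- g ^ 2)))) - 3 / 2 * g ^ 2)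
   with (ln (1 + sqrt (1 - exp (- g ^ 2)))) by (field; lra).
  rewrite exp_ln. reflexivity. unfold ss in H. lra.
Qed.

Lemma uu_lt g x y : 0 < g -> x < y -> uu g x < uu g y.
Proof. intros. unfold uu. apply exp_increasing. nra. Qed.

Lemma tsum g : 0 < g -> tplus g + tminus g = 2 * g.
Proof.
  intros hg. destruct (ss_facts g hg) as [[h1 h2] h3].
  unfold tplus, tminus.
  assert (e : ln (1 - sqrt (1 - exp (- g ^ 2))) + ln (1 + sqrt (1 - exp (- g ^ 2))) = - g^2).
  { rewrite <- ln_mult. fold (ss g).
    replace ((1 - ss g) * (1 + ss g)) with (1 - (ss g)^2) by ring. rewrite h3. replace (1 - (1 - exp (- g^2))) with (exp (- g^2)) by ring. apply ln_exp. unfold ss in *; lra. unfold ss in *; lra. }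
  replace (3 / 2 * g + / g * ln (1 - sqrt (1 - exp (- g ^ 2))) +
    (3 / 2 * g + / g * ln (1 + sqrt (1 - exp (- g ^ 2)))))
   with (3 * g + / g * (ln (1 - sqrt (1 - exp (- g ^ 2))) + ln (1 + sqrt (1 - exp (- g ^ 2))))) by (field; lra).
  rewrite e. field. lra.
Qed.

Lemma tlt g : 0 < g -> tplus g < tminus g.
Proof.
  intros hg. destruct (ss_facts g hg) as [[h1 h2] h3].
  destruct (Rlt_or_le (tplus g) (tminus g)) as [h|h]; auto.
  destruct (Rle_lt_or_eq_dec _ _ h) as [h'|h'].
  - apply (uu_lt g) in h'; auto. rewrite uu_tplus, uu_tminus in h'; lra.
  - pose proof (uu_tplus g hg). rewrite <- h', uu_tminus in H; lra.
Qed.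

Lemma sign_int g z t : 0 < g -> 0 < z ->
  (t < tplus g -> 0 < integrand g z t) /\
  (tminus g < t -> 0 < integrand g z t) /\
  (tplus g < t < tminus g -> integrand g z t < 0) /\
  (t = tplus g -> integrand g z t = 0) /\
  (t = tminus g -> integrand g z t = 0).
Proof.
  intros hg hz. destruct (ss_facts g hg) as [[h1 h2] h3].
  rewrite integrand_factor.
  assert (ep : 0 < z/2 * exp (-(t-g)^2/2) / uu g t).
  { unfold uu. pose proof (exp_pos (-(t-g)^2/2)). pose proof (exp_pos (g * t - 3 / 2 * g ^ 2)).
    apply Rdiv_lt_0_compat; nra. }
  assert (fac : (uu g t)^2 - 2 * uu g t + exp (- g^2) = (uu g t - (1 - ss g)) * (uu g t - (1 + ss g))).
  { nra. }
  rewrite fac. set (K := z / 2 * exp (- (t - g) ^ 2 / 2) / uu g t) in *.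
  pose proof (uu_tplus g hg). pose proof (uu_tminus g hg).
  repeat split; intros.
  - apply (uu_lt g) in H1; auto. apply Rmult_lt_0_compat; auto. nra.
  - apply (uu_lt g) in H1; auto. apply Rmult_lt_0_compat; auto. nra.
  - destruct H1 as [a b]. apply (uu_lt g) in a; auto. apply (uu_lt g) in b; auto.
    assert (0 < -((uu g t - (1 - ss g)) * (uu g t - (1 + ss g)))) by nra. nra.
  - subst. rewrite H. ring.
  - subst. rewrite H0. ring.
Qed.

Lemma incr_strict (f df : R -> R) x y : x < y -> (forall t, is_derive f t (df t)) ->
  (forall t, x < t < y -> 0 < df t) -> (forall t, x <= t <= y -> 0 <= df t) -> f x < f y.
Proof.
  intros hxy hd hpos hnn.
  assert (mvt : forall a b, a < b -> exists c, a <= c <= b /\ f b - f a = df c * (b - a)).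
  { intros a b hab. destruct (MVT_gen f a b df) as [c [hc e]].
    intros; apply hd.
    intros; apply continuity_pt_filterlim. apply (ex_derive_continuous (V:=R_NormedModule)). eexists; apply hd.
    rewrite Rmin_left, Rmax_right in hc by lra. eauto. }
  set (m1 := x + (y - x)/3). set (m2 := x + 2*(y-x)/3).
  destruct (mvt x m1) as [c1 [hc1 e1]]. unfold m1; lra.
  destruct (mvt m1 m2) as [c2 [hc2 e2]]. unfold m1, m2; lra.
  destruct (mvt m2 y) as [c3 [hc3 e3]]. unfold m2; lra.
  assert (0 <= df c1) by (apply hnn; unfold m1 in *; lra).
  assert (0 < df c2) by (apply hpos; unfold m1, m2 in *; lra).
  assert (0 <= df c3) by (apply hnn; unfold m2 in *; lra).
  assert (0 <= df c1 * (m1 - x)) by (apply Rmult_le_pos; unfold m1; lra).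
  assert (0 < df c2 * (m2 - m1)) by (apply Rmult_lt_0_compat; unfold m1, m2; lra).
  assert (0 <= df c3 * (y - m2)) by (apply Rmult_le_pos; unfold m2; lra).
  lra.
Qed.

Lemma integrand_cont g z x : continuous (T:=R_UniformSpace) (U:=R_UniformSpace) (integrand g z) x.
Proof. apply (ex_derive_continuous (V:=R_NormedModule)). unfold integrand. auto_derive. auto. Qed.

Lemma ftilde_Q g z L : filterlim (fun a => RInt phi a 0) (Rbar_locally m_infty) (locally L) ->
  forall t, ftilde g z t = / sqrt (2 * PI) * Q g z L t.
Proof.
  intros HL t. unfold ftilde. f_equal.
  apply is_RInt_gen_unique.
  assert (H := is_RInt_gen_Derive (Fa := Rbar_locally m_infty) (Fb := at_point t) (Q g z L) 0 (Q g z L t)).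
  replace (Q g z L t) with (Q g z L t - 0) by ring.
  apply (is_RInt_gen_ext (Derive (Q g z L))).
  apply filter_forall. intros ab x _. apply is_derive_unique, Q_deriv.
  apply H.
  apply filter_forall. intros ab x _. eexists; apply Q_deriv.
  apply filter_forall. intros ab x _.
  apply (continuous_ext (integrand g z)). intros; symmetry; apply is_derive_unique, Q_deriv.
  apply integrand_cont.
  apply (Q_lim g z L HL).
  intros P HP. exact (locally_singleton _ _ HP).
Qed.

Lemma lim_nonneg (f : R -> R) y : is_lim f m_infty 0 -> (forall s, s < y -> f s < f y) -> 0 <= f y.
Proof.
  intros hl hlt. destruct (Rle_or_lt 0 (f y)) as [h|h]; auto. exfalso.
  destruct (proj2 (is_lim_spec f m_infty 0) hl (mkposreal _ (Ropp_0_gt_lt_contravar _ h))) as [M HM].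
  set (s := Rmin M y - 1).
  assert (s < M) by (unfold s; pose proof (Rmin_l M y); lra).
  assert (s < y) by (unfold s; pose proof (Rmin_r M y); lra).
  specialize (HM s H). specialize (hlt s H0). simpl in HM.
  rewrite Rminus_0_r in HM. apply Rabs_def2 in HM. lra.
Qed.

Theorem lemma6 (g z : R) (hg : 0 < g <= 1) (hz : 0 < z <= 1) :
  (forall t : R, (forall s : R, fabs g z s <= fabs g z t) <-> (t = tplus g \/ t = tminus g))
  /\ ftilde g z (tplus g) > 0 /\ ftilde g z (tminus g) < 0.
Proof.
  destruct hg as [hg _]. destruct hz as [hz _].
  destruct phi_limit as [L HL].
  set (c := / sqrt (2 * PI)).
  assert (hc : 0 < c).
  { unfold c. apply Rinv_0_lt_compat, sqrt_lt_R0. pose proof PI_RGT_0. lra. }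
  set (q := Q g z L).
  assert (HF : forall t, ftilde g z t = c * q t) by (intros; apply ftilde_Q; auto).
  set (tp := tplus g). set (tm := tminus g).
  assert (Htlt : tp < tm) by (apply tlt; auto).
  assert (Hsum : tp + tm = 2 * g) by (apply tsum; auto).
  assert (Hodd : forall t, q (2*g - t) = - q t) by (intros; apply Q_odd).
  assert (Hd : forall t, is_derive q t (integrand g z t)) by (intros; apply Q_deriv).
  assert (Hlim : is_lim q m_infty 0) by (apply Q_lim; auto).
  assert (S1 : forall t, t < tp -> 0 < integrand g z t) by (intros t; exact (proj1 (sign_int g z t hg hz))).
  assert (S2 : forall t, tm < t -> 0 < integrand g z t) by (intros t; exact (proj1 (proj2 (sign_int g z t hg hz)))).
  assert (S3 : forall t, tp < t < tm -> integrand g z t < 0) by (intros t; exact (proj1 (proj2 (proj2 (sign_int g z t hg hz))))).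
  assert (S4 : integrand g z tp = 0) by (exact (proj1 (proj2 (proj2 (proj2 (sign_int g z tp hg hz)))) eq_refl)).
  assert (S5 : integrand g z tm = 0) by (exact (proj2 (proj2 (proj2 (proj2 (sign_int g z tm hg hz)))) eq_refl)).
  assert (D1 : forall x y, x < y <= tp -> q x < q y).
  { intros x y [hxy hy]. apply (incr_strict q (integrand g z)); auto.
    intros t ht. apply S1. lra.
    intros t ht. destruct (Rle_lt_or_eq_dec t tp) as [h|h]. lra.
    left; apply S1; auto. subst; lra. }
  assert (D2 : forall x y, tp <= x -> x < y -> y <= tm -> q y < q x).
  { intros x y hx hxy hy.
    assert (- q x < - q y); [|lra].
    apply (incr_strict (fun t => - q t) (fun t => - integrand g z t)); auto.
    intros t; apply (is_derive_opp (K:=R_AbsRing) (V:=R_NormedModule) q); auto.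
    intros t ht. assert (integrand g z t < 0) by (apply S3; lra). lra.
    intros t ht.
    destruct (Req_dec t tp) as [e|ne]. subst; lra.
    destruct (Req_dec t tm) as [e|ne2]. subst; lra.
    assert (integrand g z t < 0) by (apply S3; lra). lra. }
  assert (Pos : forall t, t <= tp -> 0 < q t).
  { intros t ht. assert (0 <= q (t - 1)).
    { apply lim_nonneg; auto. intros s hs. apply D1; lra. }
    assert (q (t-1) < q t) by (apply D1; lra). lra. }
  set (M := q tp).
  assert (HM : 0 < M) by (apply Pos; lra).
  assert (Hqm : q tm = - M).
  { unfold M. rewrite <- Hodd. f_equal. lra. }
  assert (Key : forall t, t <> tp -> t <> tm -> Rabs (q t) < M).
  { intros t h1 h2.
    destruct (Rtotal_order t tp) as [a|[a|a]]; [|congruence|].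
    - assert (0 < q t) by (apply Pos; lra). assert (q t < M) by (apply D1; lra).
      rewrite Rabs_right; lra.
    - destruct (Rtotal_order t tm) as [b|[b|b]]; [|congruence|].
      + assert (q t < M) by (apply D2; lra). assert (q tm < q t) by (apply D2; lra).
        apply Rabs_def1; lra.
      + assert (0 < q (2*g - t)) by (apply Pos; lra). assert (q (2*g - t) < M) by (apply D1; lra).
        rewrite <- (Ropp_involutive (q t)), <- Hodd. rewrite Rabs_Ropp, Rabs_right; lra. }
  assert (Hfabs : forall t, fabs g z t = c * Rabs (q t)).
  { intros; unfold fabs; rewrite HF, Rabs_mult, (Rabs_right c); lra. }
  assert (Atp : Rabs (q tp) = M) by (apply Rabs_right; fold M; lra).
  assert (Atm : Rabs (q tm) = M) by (rewrite Hqm, Rabs_Ropp; apply Rabs_right; lra).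
  assert (Le : forall s, Rabs (q s) <= M).
  { intros s. destruct (Req_dec s tp) as [e|n1]. subst; lra.
    destruct (Req_dec s tm) as [e|n2]. subst; lra. left; auto. }
  split; [|split].
  - intros t. split.
    + intros H. destruct (Req_dec t tp) as [e|n1]; auto. destruct (Req_dec t tm) as [e|n2]; auto.
      exfalso. specialize (H tp). rewrite !Hfabs in H. specialize (Key t n1 n2).
      apply Rmult_le_reg_l in H; auto. lra.
    + intros [e|e] s; rewrite !Hfabs; apply Rmult_le_compat_l; try lra;
        fold tp tm in e; rewrite e; [rewrite Atp|rewrite Atm]; apply Le.
  - rewrite HF. fold tp. apply Rmult_lt_0_compat; auto.
  - rewrite HF. fold tm. rewrite Hqm. nra.
Qed.
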